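(* Let $D=\{(s,q)\in\mathbb{H}\times\mathbb{H}: q^2-2q\,\mathrm{Re}[s]+|s|^2\neq0\}$ and define $F:D\to\mathbb{H}$ by $$F(s,q)=-\big(q^2-2q\,\mathrm{Re}[s]+|s|^2\big)^{-1}(q-\bar s).$$ Then for every point $(s_*,q_* )\in(\mathbb{H}\times\mathbb{H})\setminus D$, $F$ admits no continuous extension to $D\cup\{(s_*,q_* )\}$. In particular, for every $s\in\mathbb{H}\setminus\mathbb{R}$ the limit $\lim_{q\to\bar s}F(s,q)$ (over $q$ with $(s,q)\in D$) does not exist.
   Context: $\mathbb{H}$ denotes the algebra of quaternions; $\bar s$, $|s|$, $\mathrm{Re}[s]$ are conjugate, norm and real part. *)

(* Defs.v *)
From Stdlib Require Import Reals Lra.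
Open Scope R_scope.

(* Quaternion a0 + a1 i + a2 j + a3 k *)
Record quat : Type := Quat { q0 : R; q1 : R; q2 : R; q3 : R }.

Definition qreal (r : R) : quat := Quat r 0 0 0.
Definition qadd (a b : quat) : quat :=
  Quat (q0 a + q0 b) (q1 a + q1 b) (q2 a + q2 b) (q3 a + q3 b).
Definition qopp (a : quat) : quat := Quat (- q0 a) (- q1 a) (- q2 a) (- q3 a).
Definition qsub (a b : quat) : quat := qadd a (qopp b).
(* Hamilton product: i^2 = j^2 = k^2 = ijk = -1 *)
Definition qmul (a b : quat) : quat :=
  Quat (q0 a * q0 b - q1 a * q1 b - q2 a * q2 b - q3 a * q3 b)
       (q0 a * q1 b + q1 a * q0 b + q2 a * q3 b - q3 a * q2 b)
       (q0 a * q2 b - q1 a * q3 b + q2 a * q0 b + q3 a * q1 b)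
       (q0 a * q3 b + q1 a * q2 b - q2 a * q1 b + q3 a * q0 b).
Definition qconj (a : quat) : quat := Quat (q0 a) (- q1 a) (- q2 a) (- q3 a).
Definition qre (a : quat) : R := q0 a.
Definition qnorm (a : quat) : R :=
  sqrt (q0 a ^ 2 + q1 a ^ 2 + q2 a ^ 2 + q3 a ^ 2).
Definition qinv (a : quat) : quat :=
  qmul (qreal (/ (qnorm a ^ 2))) (qconj a).

Definition qdist (a b : quat) : R := qnorm (qsub a b).

Definition Delta (s q : quat) : quat :=
  qadd (qsub (qmul q q) (qmul q (qreal (2 * qre s)))) (qreal (qnorm s ^ 2)).

Definition inD (p : quat * quat) : Prop := Delta (fst p) (snd p) <> qreal 0.

Definition F (p : quat * quat) : quat :=
  qopp (qmul (qinv (Delta (fst p) (snd p))) (qsub (snd p) (qconj (fst p)))).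

Definition pdist (x y : quat * quat) : R :=
  sqrt (qdist (fst x) (fst y) ^ 2 + qdist (snd x) (snd y) ^ 2).

Definition continuous_on (E : quat * quat -> Prop) (G : quat * quat -> quat) : Prop :=
  forall x, E x -> forall eps, 0 < eps -> exists delta, 0 < delta /\
    forall y, E y -> pdist y x < delta -> qdist (G y) (G x) < eps.

Definition is_real_quat (s : quat) : Prop := q1 s = 0 /\ q2 s = 0 /\ q3 s = 0.

(* Main.v *)
Require Import Defs.
From Stdlib Require Import Reals Lra Psatz Classical.
Open Scope R_scope.
Lemma qnorm_sq x : qnorm x ^ 2 = q0 x ^ 2 + q1 x ^ 2 + q2 x ^ 2 + q3 x ^ 2.
Proof. unfold qnorm; apply pow2_sqrt; nra. Qed.

Lemma DeltaA a v1 v2 v3 u1 u2 u3 t :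
  u1^2+u2^2+u3^2 = v1^2+v2^2+v3^2 ->
  Defs.Delta (Quat a v1 v2 v3) (Quat (a+t) u1 u2 u3) = Quat (t^2) (2*t*u1) (2*t*u2) (2*t*u3).
Proof.
  intros H. unfold Defs.Delta, qsub, qadd, qopp, qmul, qreal, qre. rewrite qnorm_sq. simpl.
  f_equal; nra.
Qed.

Lemma FA0 a v1 v2 v3 u1 u2 u3 t :
  u1^2+u2^2+u3^2 = v1^2+v2^2+v3^2 -> t <> 0 ->
  q0 (F (Quat a v1 v2 v3, Quat (a+t) u1 u2 u3)) =
  - (t^2 + 2*(u1*(u1+v1)+u2*(u2+v2)+u3*(u3+v3))) / (t*(t^2+4*(u1^2+u2^2+u3^2))).
Proof.
  intros H Ht. unfold F; simpl fst; simpl snd. rewrite DeltaA by exact H.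
  unfold qinv. rewrite qnorm_sq. unfold qopp, qmul, qreal, qconj, qsub, qadd. simpl.
  assert (0 <= u1^2+u2^2+u3^2) by nra.
  assert (0 < t*t) by (apply Rsqr_pos_lt; auto).
  field. split; [nra | split; [auto | nra]].
Qed.


Lemma FB1 a v1 v3 t : t <> 0 ->
  Defs.Delta (Quat a v1 0 v3) (Quat a (-v1) (-0 + t) (-v3)) = Quat (-(t^2)) 0 0 0 /\
  q2 (F (Quat a v1 0 v3, Quat a (-v1) (-0 + t) (-v3))) = 1/t.
Proof.
  intros Ht.
  assert (HD : Defs.Delta (Quat a v1 0 v3) (Quat a (-v1) (-0 + t) (-v3)) = Quat (-(t^2)) 0 0 0).
  { unfold Defs.Delta, qsub, qadd, qopp, qmul, qreal, qre. rewrite qnorm_sq. simpl. f_equal; ring. }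
  split; auto.
  unfold F; simpl fst; simpl snd. rewrite HD.
  unfold qinv. rewrite qnorm_sq. unfold qopp, qmul, qreal, qconj, qsub, qadd. simpl.
  field. auto.
Qed.

Lemma FB2 a v1 v2 v3 t : t <> 0 -> v2 <> 0 ->
  Defs.Delta (Quat a v1 v2 v3) (Quat a (-v1 + t*v2) (-v2 - t*v1) (-v3)) = Quat (-(t^2*(v1^2+v2^2))) 0 0 0 /\
  q1 (F (Quat a v1 v2 v3, Quat a (-v1 + t*v2) (-v2 - t*v1) (-v3))) = v2/(t*(v1^2+v2^2)).
Proof.
  intros Ht Hv.
  assert (HD : Defs.Delta (Quat a v1 v2 v3) (Quat a (-v1 + t*v2) (-v2 - t*v1) (-v3)) = Quat (-(t^2*(v1^2+v2^2))) 0 0 0).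
  { unfold Defs.Delta, qsub, qadd, qopp, qmul, qreal, qre. rewrite qnorm_sq. simpl. f_equal; ring. }
  split; auto.
  unfold F; simpl fst; simpl snd. rewrite HD.
  unfold qinv. rewrite qnorm_sq. unfold qopp, qmul, qreal, qconj, qsub, qadd. simpl.
  assert (0 < v2*v2) by (apply Rsqr_pos_lt; auto).
  assert (0 < t*t) by (apply Rsqr_pos_lt; auto).
  field. split; [nra|auto].
Qed.

Lemma qdist_eq x y : qdist x y =
  sqrt ((q0 x - q0 y)^2 + (q1 x - q1 y)^2 + (q2 x - q2 y)^2 + (q3 x - q3 y)^2).
Proof. unfold qdist, qnorm, qsub, qadd, qopp; simpl. f_equal; ring. Qed.

Lemma abs_le_sqrt x y : 0 <= y -> Rabs x <= sqrt (x^2 + y).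
Proof. intros Hy. rewrite <- sqrt_Rsqr_abs. apply sqrt_le_1_alt. unfold Rsqr; nra. Qed.

Lemma qdist_c0 x y : Rabs (q0 x - q0 y) <= qdist x y.
Proof. rewrite qdist_eq. match goal with |- _ <= sqrt ?e => replace e with ((q0 x - q0 y)^2 + ((q1 x - q1 y)^2 + (q2 x - q2 y)^2 + (q3 x - q3 y)^2)) end; [apply abs_le_sqrt; repeat apply Rplus_le_le_0_compat; apply pow2_ge_0 | ring]. Qed.
Lemma qdist_c1 x y : Rabs (q1 x - q1 y) <= qdist x y.
Proof. rewrite qdist_eq. match goal with |- _ <= sqrt ?e => replace e with ((q1 x - q1 y)^2 + ((q0 x - q0 y)^2 + (q2 x - q2 y)^2 + (q3 x - q3 y)^2)) end; [apply abs_le_sqrt; repeat apply Rplus_le_le_0_compat; apply pow2_ge_0 | ring]. Qed.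
Lemma qdist_c2 x y : Rabs (q2 x - q2 y) <= qdist x y.
Proof. rewrite qdist_eq. match goal with |- _ <= sqrt ?e => replace e with ((q2 x - q2 y)^2 + ((q1 x - q1 y)^2 + (q0 x - q0 y)^2 + (q3 x - q3 y)^2)) end; [apply abs_le_sqrt; repeat apply Rplus_le_le_0_compat; apply pow2_ge_0 | ring]. Qed.

Lemma abs_away x l : Rabs l + 1 <= Rabs x -> 1 <= Rabs (x - l).
Proof. unfold Rabs; repeat destruct Rcase_abs; lra. Qed.

Lemma sqrt_lt_help x y : 0 <= x -> x < y^2 -> 0 < y -> sqrt x < y.
Proof. intros. rewrite <- (sqrt_pow2 y) by lra. apply sqrt_lt_1_alt; lra. Qed.

Lemma Delta_zero a v1 v2 v3 c u1 u2 u3 :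
  Defs.Delta (Quat a v1 v2 v3) (Quat c u1 u2 u3) = qreal 0 ->
  c = a /\ u1^2+u2^2+u3^2 = v1^2+v2^2+v3^2.
Proof.
  unfold Defs.Delta, qsub, qadd, qopp, qmul, qreal, qre. rewrite qnorm_sq. simpl.
  intros H; injection H; intros E3 E2 E1 E0.
  assert (Hc : c = a).
  { destruct (Req_dec c a) as [|Hne]; auto.
    assert (u1 = 0) by (apply (Rmult_eq_reg_l (2*(c-a))); [lra| intro; apply Hne; lra]).
    assert (u2 = 0) by (apply (Rmult_eq_reg_l (2*(c-a))); [lra| intro; apply Hne; lra]).
    assert (u3 = 0) by (apply (Rmult_eq_reg_l (2*(c-a))); [lra| intro; apply Hne; lra]).
    subst. exfalso. assert (0 < (c-a)*(c-a)) by (apply Rsqr_pos_lt; lra). nra. }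
  subst c. split; auto. nra.
Qed.

Lemma lt_div_mul t Q D : 0 < D -> t < Q / D -> t * D < Q.
Proof. intros HD H. replace Q with (Q / D * D) by (field; lra). apply Rmult_lt_compat_r; auto. Qed.
Lemma le_div_mul t Q D : 0 < D -> t <= Q / D -> t * D <= Q.
Proof. intros HD H. replace Q with (Q / D * D) by (field; lra). apply Rmult_le_compat_r; lra. Qed.

Lemma pick3 x y z : 0 < x -> 0 < y -> 0 < z -> exists t, 0 < t /\ t < x /\ t < y /\ t < z.
Proof.
  intros. exists (Rmin x (Rmin y z) / 2).
  pose proof (Rmin_l x (Rmin y z)). pose proof (Rmin_r x (Rmin y z)).
  pose proof (Rmin_l y z). pose proof (Rmin_r y z).
  assert (0 < Rmin x (Rmin y z)) by (repeat apply Rmin_glb_lt; auto).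
  lra.
Qed.

Lemma inD_real s q r : Defs.Delta s q = Quat r 0 0 0 -> r <> 0 -> inD (s, q).
Proof. intros HD Hr. unfold inD; simpl. rewrite HD. intro E. injection E. auto. Qed.

Lemma sum3_pos x y z : x <> 0 \/ y <> 0 \/ z <> 0 -> 0 < x^2+y^2+z^2.
Proof.
  intros Hh. pose proof (pow2_ge_0 x). pose proof (pow2_ge_0 y). pose proof (pow2_ge_0 z).
  destruct Hh as [h|[h|h]]; apply Rsqr_pos_lt in h; unfold Rsqr in h; simpl; lra.
Qed.

Lemma keyA a v1 v2 v3 u1 u2 u3 L delta :
  u1^2+u2^2+u3^2 = v1^2+v2^2+v3^2 -> 0 < delta ->
  0 < (u1+v1)^2+(u2+v2)^2+(u3+v3)^2 ->
  exists q', inD (Quat a v1 v2 v3, q') /\ 0 < qdist q' (Quat a u1 u2 u3) /\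
    qdist q' (Quat a u1 u2 u3) < delta /\ 1 <= qdist (F (Quat a v1 v2 v3, q')) L.
Proof.
  intros H Hd HP.
  set (Q := 2*(u1*(u1+v1)+u2*(u2+v2)+u3*(u3+v3))).
  set (B := u1^2+u2^2+u3^2).
  assert (HQ : 0 < Q) by (unfold Q; nra).
  assert (HB : 0 <= B) by (unfold B; nra).
  set (K := Rabs (q0 L) + 1).
  assert (HK : 0 < K) by (unfold K; pose proof (Rabs_pos (q0 L)); lra).
  destruct (pick3 1 delta (Q/((1+4*B)*K))) as [t [Ht0 [Ht1 [Ht2 Ht3]]]]; try lra.
  { apply Rdiv_lt_0_compat; nra. }
  pose proof (DeltaA a v1 v2 v3 u1 u2 u3 t H) as FD.
  pose proof (FA0 a v1 v2 v3 u1 u2 u3 t H ltac:(lra)) as FF.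
  fold Q B in FF.
  assert (Hq : qdist (Quat (a+t) u1 u2 u3) (Quat a u1 u2 u3) = t).
  { rewrite qdist_eq; simpl. replace (_ + _) with (t^2) by ring. rewrite sqrt_pow2; lra. }
  exists (Quat (a+t) u1 u2 u3). split; [|split; [|split]].
  - unfold inD; simpl. rewrite FD. intro E. injection E. intros. assert (0 < t^2) by (apply pow_lt; lra). lra.
  - lra.
  - lra.
  - eapply Rle_trans; [|apply qdist_c0]. apply abs_away. rewrite FF. fold K.
    set (X := t*(t^2+4*B)).
    assert (HX : 0 < X) by (unfold X; assert (0 < t^2) by (apply pow_lt; lra); nra).
    set (y := (t^2+Q)/X).
    assert (Hy : - (t^2+Q)/X = - y) by (unfold y; field; lra).
    rewrite Hy. assert (HyX : y * X = t^2 + Q) by (unfold y; field; lra).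
    apply lt_div_mul in Ht3; [|nra].
    assert (HX2 : X <= t*(1+4*B)) by (unfold X; nra).
    assert (HKX : K * X <= t^2 + Q) by nra.
    assert (Hky : K <= y) by nra.
    rewrite Rabs_Ropp. rewrite Rabs_pos_eq; lra.
Qed.

Lemma key s q L delta : Defs.Delta s q = qreal 0 -> 0 < delta ->
  exists q', inD (s, q') /\ 0 < qdist q' q /\ qdist q' q < delta /\ 1 <= qdist (F (s, q')) L.
Proof.
  destruct s as [a v1 v2 v3], q as [c u1 u2 u3].
  intros HD Hd. apply Delta_zero in HD. destruct HD as [Hc H]. subst c.
  destruct (Req_dec (u1+v1) 0) as [E1|E1];
  [destruct (Req_dec (u2+v2) 0) as [E2|E2];
   [destruct (Req_dec (u3+v3) 0) as [E3|E3]|]|].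
  2: { apply keyA; auto. apply sum3_pos; auto. }
  2: { apply keyA; auto. apply sum3_pos; auto. }
  2: { apply keyA; auto. apply sum3_pos; auto. }
  -
    assert (u1 = -v1) by lra. assert (u2 = -v2) by lra. assert (u3 = -v3) by lra. subst u1 u2 u3.
    destruct (Req_dec v2 0) as [Hv2|Hv2].
    + subst v2. set (K := Rabs (q2 L) + 1).
      assert (HK : 0 < K) by (unfold K; pose proof (Rabs_pos (q2 L)); lra).
      destruct (pick3 1 delta (1/K)) as [t [Ht0 [Ht1 [Ht2 Ht3]]]]; try lra.
      { apply Rdiv_lt_0_compat; lra. }
      destruct (FB1 a v1 v3 t) as [FD FF]; [lra|].
      exists (Quat a (-v1) (-0 + t) (-v3)). split; [|split; [|split]].
      * apply (inD_real _ _ _ FD). assert (0 < t*t) by nra. nra.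
      * rewrite qdist_eq; simpl. replace (_ + _) with (t^2) by ring. rewrite sqrt_pow2; lra.
      * rewrite qdist_eq; simpl. replace (_ + _) with (t^2) by ring. rewrite sqrt_pow2; lra.
      * eapply Rle_trans; [|apply qdist_c2]. apply abs_away. rewrite FF.
        rewrite (Rabs_pos_eq (1/t)) by (apply Rlt_le, Rdiv_lt_0_compat; lra).
        fold K. apply (Rmult_le_reg_r t); [lra|]. replace (1/t*t) with 1 by (field; lra).
        apply lt_div_mul in Ht3; lra.
    + set (K := Rabs (q1 L) + 1). set (W := v1^2+v2^2).
      assert (HK : 0 < K) by (unfold K; pose proof (Rabs_pos (q1 L)); lra).
      assert (HW : 0 < W) by (unfold W; assert (0 < v2*v2) by (apply Rsqr_pos_lt; auto); nra).
      assert (Hav : 0 < Rabs v2) by (apply Rabs_pos_lt; auto).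
      destruct (pick3 1 (delta/(1+W)) (Rabs v2/(W*K))) as [t [Ht0 [Ht1 [Ht2 Ht3]]]]; try lra.
      { apply Rdiv_lt_0_compat; lra. }
      { apply Rdiv_lt_0_compat; nra. }
      destruct (FB2 a v1 v2 v3 t) as [FD FF]; [lra|auto|].
      fold W in FD, FF.
      assert (Ht2W : 0 < t^2*W) by (apply Rmult_lt_0_compat; [apply pow_lt|]; lra).
      assert (Hq : qdist (Quat a (-v1 + t*v2) (-v2 - t*v1) (-v3)) (Quat a (-v1) (-v2) (-v3)) = sqrt (t^2*W)).
      { rewrite qdist_eq; simpl. f_equal. unfold W. ring. }
      exists (Quat a (-v1 + t*v2) (-v2 - t*v1) (-v3)). split; [|split; [|split]].
      * apply (inD_real _ _ _ FD). lra.
      * rewrite Hq. apply sqrt_lt_R0. lra.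
      * rewrite Hq. apply sqrt_lt_help; try lra. apply lt_div_mul in Ht2; [|lra].
        assert (HA : 0 < t*(1+W)) by nra.
        assert (HB : (t*(1+W))*(t*(1+W)) < delta*delta) by nra.
        assert (HC : t^2*W <= (t*(1+W))*(t*(1+W))).
        { replace ((t*(1+W))*(t*(1+W))) with (t^2*((1+W)*(1+W))) by ring.
          apply Rmult_le_compat_l; [apply pow2_ge_0|nra]. }
        simpl. lra.
      * eapply Rle_trans; [|apply qdist_c1]. apply abs_away. rewrite FF. fold K.
        assert (HtW : 0 < t*W) by nra.
        assert (Hy : v2 / (t*W) * (t*W) = v2) by (field; lra).
        assert (Hy2 : Rabs (v2/(t*W)) * (t*W) = Rabs v2).
        { rewrite <- Hy at 2. rewrite Rabs_mult. rewrite (Rabs_pos_eq (t*W)); lra. }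
        apply (Rmult_le_reg_r (t*W)); [lra|]. rewrite Hy2.
        apply lt_div_mul in Ht3; [|nra]. nra.
Qed.

Lemma Delta_conj s : Defs.Delta s (qconj s) = qreal 0.
Proof.
  destruct s as [a v1 v2 v3]. unfold Defs.Delta, qsub, qadd, qopp, qmul, qreal, qre, qconj.
  rewrite qnorm_sq. simpl. f_equal; ring.
Qed.

Lemma pdist_same s q q' : pdist (s, q') (s, q) = qdist q' q.
Proof.
  unfold pdist; cbn [fst snd]. assert (E : qdist s s = 0).
  { rewrite qdist_eq. replace (_ + _) with 0 by ring. apply sqrt_0. }
  rewrite E. replace (0^2 + qdist q' q ^2) with (qdist q' q ^ 2) by ring.
  apply sqrt_pow2. unfold qdist, qnorm. apply sqrt_pos.
Qed.

Theorem theorem3p9 :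
  (forall pstar : quat * quat, ~ inD pstar ->
     ~ exists G : quat * quat -> quat,
         (forall p, inD p -> G p = F p) /\
         continuous_on (fun p => inD p \/ p = pstar) G)
  /\
  (forall s : quat, ~ is_real_quat s ->
     ~ exists L : quat, forall eps, 0 < eps -> exists delta, 0 < delta /\
         forall q : quat, inD (s, q) -> 0 < qdist q (qconj s) < delta ->
           qdist (F (s, q)) L < eps).
Proof.
  split.
  - intros [s q] Hn [G [HG Hc]].
    assert (HD : Defs.Delta s q = qreal 0).
    { unfold inD in Hn; simpl in Hn. destruct (classic (Defs.Delta s q = qreal 0)); tauto. }
    destruct (Hc (s, q) (or_intror eq_refl) 1 ltac:(lra)) as [d [Hd Hy]].
    destruct (key s q (G (s, q)) d HD Hd) as [q' [Hin [H0 [H1 H2]]]].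
    specialize (Hy (s, q') (or_introl Hin)). rewrite pdist_same in Hy.
    specialize (Hy H1). rewrite HG in Hy by exact Hin. lra.
  - intros s _ [L HL].
    destruct (HL 1 ltac:(lra)) as [d [Hd Hy]].
    destruct (key s (qconj s) L d (Delta_conj s) Hd) as [q' [Hin [H0 [H1 H2]]]].
    specialize (Hy q' Hin (conj H0 H1)). lra.
Qed.
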